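(* Let $k\ge 1$ and let $\pi$ be a feasible signature of a $k$-move. Then there is a subset $E_\pi\subseteq\{e_1,\ldots,e_k\}$ of the removed edges with $|E_\pi|\ge\lceil k/3\rceil$ whose edges are pairwise non-interfering.
   Context: Consider a tour $T$ (Hamiltonian cycle) in a complete graph and a $k$-move that removes edges $e_1,\ldots,e_k$ of $T$ and inserts $k$ edges $f_1,\ldots,f_k$ so that the result is a tour. Write $e_i=\{v_{2i-1},v_{2i}\}$, where the vertices $v_1,\ldots,v_{2k}$ are pairwise distinct and indexed in the order in which $T$ traverses them. The signature of the move is the permutation $\pi$ of $\{1,\ldots,2k\}$ such that $v_j$ and $v_{\pi(j)}$ are the two endpoints of one of the inserted edges $f_1,\ldots,f_k$; a signature is feasible if it arises from some $k$-move (so $\pi(\pi(j))=j$, $\pi(j)\ne j$, and removing the $e_i$ and inserting the $f_i$ yields a single Hamiltonian cycle). Two removed edges $e_i,e_j$ ($i\ne j$) interfere if some inserted edge connects an endpoint of $e_i$ to an endpoint of $e_j$ (equivalently, $\pi(\{2i-1,2i\})\cap\{2j-1,2j\}\neq\emptyset$); otherwise they are non-interfering. *)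

(* Defs.v *)
From mathcomp Require Import all_boot all_fingroup.
From mathcomp Require Import zify.

Set Implicit Arguments.
Unset Strict Implicit.
Unset Printing Implicit Defensive.

(* Conventions (0-based): vertices of K_n are 'I_n; a tour T is given by a
   permutation s : {perm 'I_n} listing its vertices in traversal order
   (position p holds vertex s p); its edges are {s p, s (p+1 mod n)}.
   The 2k endpoints of a k-move are v : 'I_(2k) -> 'I_n; the removed edge
   e_i (i : 'I_k, the paper's e_{i+1}) is {v (2i), v (2i+1)}. *)

Lemma lo_subproof k (i : 'I_k) : 2 * i < 2 * k.
Proof. have := ltn_ord i; lia. Qed.
Lemma hi_subproof k (i : 'I_k) : (2 * i).+1 < 2 * k.
Proof. have := ltn_ord i; lia. Qed.

Definition lo k (i : 'I_k) : 'I_(2 * k) := Ordinal (lo_subproof i).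
Definition hi k (i : 'I_k) : 'I_(2 * k) := Ordinal (hi_subproof i).

Definition tour_edges n (s : {perm 'I_n}) : {set {set 'I_n}} :=
  [set [set s p; s (ordS p)] | p : 'I_n].

Definition is_tour n (F : {set {set 'I_n}}) : Prop :=
  exists s : {perm 'I_n}, F = tour_edges s.

Definition removed_edges n k (v : 'I_(2 * k) -> 'I_n) : {set {set 'I_n}} :=
  [set [set v (lo i); v (hi i)] | i : 'I_k].

Definition inserted_edges n k (v : 'I_(2 * k) -> 'I_n) (pi : {perm 'I_(2 * k)})
  : {set {set 'I_n}} :=
  [set [set v j; v (pi j)] | j : 'I_(2 * k)].

Definition feasible_signature k (pi : {perm 'I_(2 * k)}) : Prop :=
  [/\ forall j, pi (pi j) = j,
      forall j, pi j != j &
      exists n (s : {perm 'I_n}) (v : 'I_(2 * k) -> 'I_n),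
        [/\ 3 <= n,
            injective v,
            (* v_1,...,v_{2k} indexed in the order T traverses them *)
            (forall j j' : 'I_(2 * k), j < j' -> ((s^-1)%g (v j) < (s^-1)%g (v j'))%N),
            removed_edges v \subset tour_edges s &
            is_tour ((tour_edges s :\: removed_edges v) :|: inserted_edges v pi)]].

Definition interfere k (pi : {perm 'I_(2 * k)}) (i j : 'I_k) : Prop :=
  exists2 a, a \in [set lo i; hi i] & pi a \in [set lo j; hi j].

(* Main.v *)
Require Import Defs.
From mathcomp Require Import all_boot all_fingroup.
From mathcomp Require Import zify.
Set Implicit Arguments.
Unset Strict Implicit.

Lemma blk_subproof k (a : 'I_(2 * k)) : a %/ 2 < k.
Proof. have := ltn_ord a; lia. Qed.
Definition blk k (a : 'I_(2 * k)) : 'I_k := Ordinal (blk_subproof a).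

Lemma blk_mem k (a : 'I_(2 * k)) (i : 'I_k) : a \in [set lo i; hi i] -> blk a = i.
Proof.
rewrite !inE => /orP [] /eqP -> ; apply/val_inj => /=; lia.
Qed.

Lemma greedy k (pi : {perm 'I_(2 * k)}) (Hinv : forall j, pi (pi j) = j) :
  forall n (S : {set 'I_k}), #|S| <= n ->
  exists E : {set 'I_k}, [/\ E \subset S, #|S| <= 3 * #|E| &
    (forall i j, i \in E -> j \in E -> i != j -> ~ interfere pi i j)].
Proof.
elim=> [|n IH] S HS.
  exists set0; split; first exact: sub0set.
    by move: HS; rewrite leqn0 => /eqP ->.
  by move=> i j; rewrite inE.
case: (set_0Vmem S) => [->|[x xS]].
  exists set0; split; first exact: sub0set.
    by rewrite cards0.
  by move=> i j; rewrite inE.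
set N := [set x; blk (pi (lo x)); blk (pi (hi x))].
have cN : #|N| <= 3.
  rewrite /N cardsU; apply: leq_trans (leq_subr _ _) _.
  rewrite cards1 addn1 ltnS cardsU !cards1; exact: leq_subr.
have HS' : #|S :\: N| <= n.
  have : x \in S :&: N by rewrite !inE eqxx xS.
  move=> xSN; have := cardsD S N; have : 0 < #|S :&: N| by apply/card_gt0P; exists x.
  lia.
have [E' [sub cE indep]] := IH _ HS'.
have xE' : x \notin E'.
  apply/negP => /(subsetP sub); rewrite !inE eqxx; done.
exists (x |: E'); split.
- apply/subsetP => y; rewrite !inE => /orP [/eqP ->|/(subsetP sub)] //.
  by rewrite !inE => /andP [].
- rewrite cardsU1 xE' add1n.
  have := cardsD S N; have : #|S :&: N| <= 3 by apply: leq_trans cN; apply: subset_leq_card; apply: subsetIr.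
  lia.
- have key : forall j, j \in E' -> ~ interfere pi x j /\ ~ interfere pi j x.
    move=> j jE; have := subsetP sub j jE; rewrite !inE => /andP [jN _].
    split.
      move=> [a aX paJ]; move: jN; rewrite -(blk_mem paJ).
      by move: aX; rewrite !inE => /orP [] /eqP ->; rewrite eqxx ?orbT.
    move=> [a aJ paX]; move: jN; have := blk_mem aJ; rewrite -{1}(Hinv a) => <-.
    by move: paX; rewrite !inE => /orP [] /eqP ->; rewrite eqxx ?orbT.
  move=> i j; rewrite !inE => /orP [/eqP ->|iE] /orP [/eqP ->|jE] ij.
  + by rewrite eqxx in ij.
  + exact: (key j jE).1.
  + exact: (key i iE).2.
  + exact: indep.
Qed.

Theorem lemma7 (k : nat) (pi : {perm 'I_(2 * k)}) :
  1 <= k -> feasible_signature pi ->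
  exists E : {set 'I_k},
    (k + 2) %/ 3 <= #|E| /\
    (forall i j, i \in E -> j \in E -> i != j -> ~ interfere pi i j).
Proof.
move=> _ [Hinv _ _].
have [E [_ cE indep]] := greedy Hinv (leqnn #|[set: 'I_k]|).
exists E; split => //.
move: cE; rewrite cardsT card_ord; lia.
Qed.
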